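(* (i) Let $J:\tilde{\mathcal{A}}_{\mathbf{k}_0}\to\tilde{\mathcal{A}}_{\mathbf{k}_0}$ be a linear map for which there are complex numbers $c_{\mathbf{j};\mathbf{p}}$ ($\mathbf{j}\ge\mathbf{k}_0$, $\mathbf{p}\in\mathbb{N}^M\setminus\{\mathbf 0\}$) such that for every $\tilde S\in\tilde{\mathcal{A}}_{\mathbf{k}_0}$ and every representation $\tilde S=\sum_{\mathbf{j}\ge\mathbf{k}_0}c_{\mathbf{j}}\mu_{\mathbf{j}}$ one has $J\tilde S=\sum_{\mathbf{j}\ge\mathbf{k}_0}c_{\mathbf{j}}\sum_{\mathbf{p}\in\mathbb{N}^M\setminus\{0\}}c_{\mathbf{j};\mathbf{p}}\mu_{\mathbf{j}+\mathbf{p}}$. Then for every $\tilde S_0\in\tilde{\mathcal{A}}_{\mathbf{k}_0}$ the equation $\tilde S=J\tilde S+\tilde S_0$ has a unique solution $\tilde S\in\tilde{\mathcal{A}}_{\mathbf{k}_0}$. (ii) Let $A\subset\tilde{\mathcal{A}}_{\mathbf{k}_0}$ be nonempty and closed in the asymptotic topology, and let $J:A\to A$ (linear or not) be asymptotically contractive on $A$. Then the equation $\tilde S=J(\tilde S)$ has a unique solution $\tilde S\in A$.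
   Context: $(\mathcal{G},\cdot,\le)$ is a totally ordered abelian group (order compatible with multiplication). Fix $M\ge1$, $\mu_1,\dots,\mu_M\in\mathcal{G}$ with $\mu_i<1$, $\mu_{\mathbf{k}}=\prod_i\mu_i^{k_i}$ for $\mathbf{k}\in\mathbb{Z}^M$; $\mathbb{Z}^M$ has the componentwise order. For $\mathbf{k}_0\in\mathbb{Z}^M$, $\tilde{\mathcal{A}}_{\mathbf{k}_0}$ is the set of formal sums $\sum_{\mathbf{k}\ge\mathbf{k}_0}c_{\mathbf{k}}\mu_{\mathbf{k}}$ ($c_{\mathbf{k}}\in\mathbb{C}$), two formal sums being identified iff for each $g\in\mathcal{G}$ the finite sums $\sum_{\mathbf{k}\ge\mathbf{k}_0,\mu_{\mathbf{k}}=g}c_{\mathbf{k}}$ coincide (the coefficient of $g$); addition is coefficientwise. A formal expression $\sum_{\mathbf{k}\ge\mathbf{k}_0}\sum_{\mathbf{p}\in\mathbb{N}^M\setminus\{0\}}a_{\mathbf{k},\mathbf{p}}\mu_{\mathbf{k}+\mathbf{p}}$ denotes the element whose coefficient of $g$ is the (finite) sum of $a_{\mathbf{k},\mathbf{p}}$ over $\mu_{\mathbf{k}+\mathbf{p}}=g$. Asymptotic topology: a sequence converges iff for each $g\in\mathcal{G}$ its coefficient of $g$ is eventually constant; closed means sequentially closed. A map $J:A\to A$ is asymptotically contractive on $A$ if for all $f_1,f_2\in A$ and every representation $f_1-f_2=\sum_{\mathbf{k}\ge\mathbf{k}_0}c_{\mathbf{k}}\mu_{\mathbf{k}}$ there exist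 complex numbers $C_{\mathbf{k};\mathbf{p}}$ ($\mathbf{k}\ge\mathbf{k}_0$, $\mathbf{p}\in\mathbb{N}^M\setminus\{0\}$), possibly depending on $f_1,f_2$, such that $J(f_1)-J(f_2)=\sum_{\mathbf{k}\ge\mathbf{k}_0}c_{\mathbf{k}}\sum_{\mathbf{p}\in\mathbb{N}^M\setminus\{0\}}C_{\mathbf{k};\mathbf{p}}\mu_{\mathbf{k}+\mathbf{p}}$. *)

(* Defs.v *)
From HB Require Import structures.
From mathcomp Require Import all_boot all_order all_algebra.
From mathcomp Require Import boolp classical_sets fsbigop reals.
From mathcomp Require Export complex.
Set Implicit Arguments. Unset Strict Implicit. Unset Printing Implicit Defensive.
Import Order.TTheory GRing.Theory Num.Theory.
Local Open Scope ring_scope.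
Local Open Scope classical_set_scope.

(* The group G is written ADDITIVELY: a zmodType G (abelian group) with a
   relation [le] which is a total order compatible with the group law.
   The identity "1" of the paper is 0 here, mu_i < 1 becomes mu_i < 0,
   and mu_k = prod_i mu_i^(k_i) becomes sum_i k_i * mu_i. *)
Definition ordered_abelian_group (G : zmodType) (le : rel G) : Prop :=
  [/\ reflexive le, antisymmetric le, transitive le, total le
    & forall x y z : G, le x y -> le (x + z) (y + z)].

Definition lt_of (G : zmodType) (le : rel G) (x y : G) : Prop :=
  le x y /\ x <> y.

Definition idx (M : nat) := {ffun 'I_M -> int}.

Definition idx_le (M : nat) (k l : idx M) : Prop := forall i, (k i <= l i)%R.

Definition idx_add (M : nat) (k l : idx M) : idx M := [ffun i => k i + l i].

Definition idx0 (M : nat) : idx M := [ffun _ => 0%R].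

Definition muk (G : zmodType) (M : nat) (mus : 'I_M -> G) (k : idx M) : G :=
  \sum_(i < M) (mus i) *~ (k i).

Section Series.
Variables (R : realType) (G : zmodType) (M : nat) (mus : 'I_M -> G) (k0 : idx M).
Local Notation C := R[i].

(* coefficient of g in the formal sum  sum_{k >= k0} c_k mu_k
   (a finite sum, cf. the paper) *)
Definition fcoef (c : idx M -> C) (g : G) : C :=
  \sum_(k \in [set k : idx M | idx_le k0 k /\ muk mus k = g]) c k.

(* coefficient of g in the formal expression
   sum_{k >= k0} sum_{p in N^M \ 0} a_{k,p} mu_{k+p} *)
Definition fcoef2 (a : idx M -> idx M -> C) (g : G) : C :=
  \sum_(kp \in [set kp : idx M * idx M | idx_le k0 kp.1 /\ idx_le (idx0 M) kp.2
                   /\ kp.2 <> idx0 M /\ muk mus (idx_add kp.1 kp.2) = g])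
     a kp.1 kp.2.

(* An element of tilde A_{k0} is identified with its coefficient function
   G -> C; tilde A_{k0} is the set of coefficient functions of formal sums. *)
Definition Atilde : set (G -> C) := [set f | exists c, f = fcoef c].

Definition asym_cvg (u : nat -> G -> C) (f : G -> C) : Prop :=
  forall g, exists N, forall n, (N <= n)%N -> u n g = f g.

Definition asym_closed (A : set (G -> C)) : Prop :=
  forall (u : nat -> G -> C) (f : G -> C),
    (forall n, A (u n)) -> Atilde f -> asym_cvg u f -> A f.

Definition asym_contractive (A : set (G -> C)) (J : (G -> C) -> (G -> C)) : Prop :=
  forall f1 f2, A f1 -> A f2 ->
  forall c : idx M -> C, (fun g => f1 g - f2 g) = fcoef c ->
  exists Cc : idx M -> idx M -> C,
    (fun g => J f1 g - J f2 g) = fcoef2 (fun k p => c k * Cc k p).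

End Series.

(* Main.v *)
Require Import Defs.
From HB Require Import structures.
From mathcomp Require Import all_boot all_order all_algebra.
From mathcomp Require Import boolp classical_sets fsbigop reals cardinality.
From mathcomp Require Import complex zify ring.
Import Order.TTheory GRing.Theory Num.Theory.
Local Open Scope ring_scope.
Local Open Scope classical_set_scope.
Set Implicit Arguments. Unset Strict Implicit.

Section OG.
Variables (G : zmodType) (le : rel G) (HG : ordered_abelian_group le).

Lemma ogrefl x : le x x. Proof. by case: HG. Qed.
Lemma ogtrans x y z : le x y -> le y z -> le x z.
Proof. by case: HG => _ _ t _ _ h1 h2; apply: (t y). Qed.
Lemma oganti x y : le x y -> le y x -> x = y.
Proof. by case: HG => _ a _ _ _ h1 h2; apply: a; rewrite h1 h2. Qed.
Lemma ogtotal x y : le x y \/ le y x.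
Proof. by case: HG => _ _ _ t _; case/orP: (t x y); [left|right]. Qed.
Lemma ogDr x y z : le x y -> le (x + z) (y + z).
Proof. by case: HG => _ _ _ _ h; apply: h. Qed.
Lemma ogDl x y z : le x y -> le (z + x) (z + y).
Proof. by rewrite ![z + _]addrC; apply: ogDr. Qed.
Lemma ogD a b c d : le a b -> le c d -> le (a + c) (b + d).
Proof. move=> h1 h2; apply: (ogtrans (ogDr c h1)); exact: ogDl. Qed.
Lemma ogcancel x y z : le (x + z) (y + z) -> le x y.
Proof. by move=> /(ogDr (- z)); rewrite !addrK. Qed.

Lemma og_sum_le (n : nat) (F H : 'I_n -> G) :
  (forall i, le (F i) (H i)) -> le (\sum_(i < n) F i) (\sum_(i < n) H i).
Proof.
move=> h; elim/big_ind2: _ => //; first exact: ogrefl.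
by move=> *; apply: ogD.
Qed.

Lemma og_mulrn_le0 x n : le x 0 -> le (x *+ n) 0.
Proof.
move=> h; elim: n => [|n IH]; first by rewrite mulr0n ogrefl.
by rewrite mulrS -[0](addr0 0); apply: ogD.
Qed.

Lemma og_mulrn_le x y n : le x y -> le (x *+ n) (y *+ n).
Proof.
move=> h; elim: n => [|n IH]; first by rewrite !mulr0n ogrefl.
by rewrite !mulrS; apply: ogD.
Qed.

Lemma og_mulrn_mono x m n : le x 0 -> (m <= n)%N -> le (x *+ n) (x *+ m).
Proof.
move=> h lmn; rewrite -(subnKC lmn) mulrnDr -{2}[x *+ m]addr0.
by apply: ogDl; apply: og_mulrn_le0.
Qed.

Lemma og_argmin n (f : 'I_n.+1 -> G) : exists j, forall i, le (f j) (f i).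
Proof.
elim: n f => [|n IH] f.
  by exists ord0 => i; rewrite (ord1 i); apply: ogrefl.
have [j' Hj'] := IH (fun i => f (lift ord0 i)).
have [h|h] := ogtotal (f ord0) (f (lift ord0 j')).
- exists ord0 => i; case: (unliftP ord0 i) => [i' ->|->]; last exact: ogrefl.
  exact: ogtrans h (Hj' i').
- exists (lift ord0 j') => i; case: (unliftP ord0 i) => [i' ->|->]; last exact: h.
  exact: Hj'.
Qed.

Lemma bound_sol n : forall mu : 'I_n -> G, (forall i, lt_of le (mu i) 0) ->
  forall h, exists D, forall p : 'I_n -> nat,
    \sum_(i < n) mu i *+ p i = h -> (\sum_(i < n) p i <= D)%N.
Proof.
elim: n => [|n IH] mu Hmu h.
  by exists 0%N => p _; rewrite big_ord0.
have [j Hj] := og_argmin mu.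
have rest0 : forall p : 'I_n -> nat,
    le (\sum_(i < n) mu (lift j i) *+ p i) 0.
  move=> p; have E : (0 : G) = \sum_(i < n) (0 : G) by rewrite big1.
  rewrite [X in le _ X]E.
  apply: og_sum_le => i; apply: og_mulrn_le0; by case: (Hmu (lift j i)).
case: (pselect (exists T, ~ le h (mu j *+ T))) => [[T HT]|HT].
- have IH' := fun t => IH (fun i => mu (lift j i)) (fun i => Hmu (lift j i))
                 (h - mu j *+ t).
  have [D HD] : exists D, forall t, (t < T)%N -> forall p : 'I_n -> nat,
      \sum_(i < n) mu (lift j i) *+ p i = h - mu j *+ t ->
      (\sum_(i < n) p i <= D)%N.
    clear HT; elim: T => [|T [D HD]]; first by exists 0%N.
    have [D' HD'] := IH' T.
    exists (maxn D D') => t; rewrite ltnS leq_eqVlt => /orP[/eqP->|ltT] p Hp.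
    + by rewrite leq_max (HD' _ Hp) orbT.
    + by rewrite leq_max (HD _ ltT _ Hp).
  exists (T + D)%N => p Hp.
  rewrite (bigD1_ord j) //=; rewrite (bigD1_ord j) //= in Hp.
  have pjT : (p j < T)%N.
    rewrite ltnNge; apply/negP => TP; apply: HT.
    apply: (@ogtrans _ (mu j *+ p j)); last first.
      by apply: og_mulrn_mono => //; case: (Hmu j).
    rewrite -Hp -{2}[mu j *+ p j]addr0; apply: ogDl.
    exact: (rest0 (fun i => p (lift j i))).
  apply: leq_add; first exact: ltnW.
  apply: (HD (p j) pjT (fun i => p (lift j i))).
  by rewrite -Hp addrAC subrr add0r.
- exists 0%N => p Hp; exfalso.
  have HT' : forall T, le h (mu j *+ T).
    by move=> T; apply: contrapT => hh; apply: HT; exists T.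
  set S := (\sum_(i < n.+1) p i)%N.
  have h1 : le (mu j *+ S) h.
    rewrite -Hp /S -sumrMnr; apply: og_sum_le => i; exact: og_mulrn_le.
  have h2 := ogtrans h1 (HT' S.+1).
  rewrite mulrSr -{1}[mu j *+ S]addr0 in h2.
  have h3 : le (0 + mu j *+ S) (mu j + mu j *+ S) by rewrite addrC [_ + mu j *+ S]addrC.
  have h4 := ogcancel h3.
  case: (Hmu j) => h5 h6; apply: h6; exact: oganti.
Qed.
End OG.

Section Main.
Variables (R : realType) (G : zmodType) (le : rel G)
  (HG : ordered_abelian_group le) (M : nat)
  (mus : 'I_M -> G) (Hmus : forall i, lt_of le (mus i) 0) (k0 : idx M).
Local Notation C := R[i].

Definition degz (k : idx M) : int := \sum_(i < M) (k i - k0 i).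
Definition Fs g := [set k : idx M | idx_le k0 k /\ muk mus k = g].
Definition Box (D : nat) := [set k : idx M | idx_le k0 k /\ degz k <= D%:Z].

Lemma degz_ge0 k : idx_le k0 k -> 0 <= degz k.
Proof. by move=> hk; apply: sumr_ge0 => i _; rewrite subr_ge0. Qed.

Lemma coord_le_degz k i : idx_le k0 k -> k i - k0 i <= degz k.
Proof.
move=> hk; rewrite /degz (bigD1 i) //= lerDl sumr_ge0 // => j _.
by rewrite subr_ge0.
Qed.

Lemma muk_split k : idx_le k0 k ->
  muk mus k = muk mus k0 + \sum_(i < M) mus i *+ `|k i - k0 i|%N.
Proof.
move=> hk; rewrite /muk -big_split; apply: eq_bigr => i _ /=.
rewrite pmulrn gez0_abs ?subr_ge0 // -mulrzDr.
by rewrite [k0 i + _]addrC subrK.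
Qed.

Lemma degz_abs k : idx_le k0 k -> degz k = (\sum_(i < M) `|k i - k0 i|%N)%:Z.
Proof.
move=> hk; rewrite /degz (big_morph Posz PoszD (erefl _)).
by apply: eq_bigr => i _; rewrite gez0_abs // subr_ge0.
Qed.

Lemma Fs_bound g : exists D : nat, forall k, Fs g k -> degz k <= D%:Z.
Proof.
have [D HD] := bound_sol HG Hmus (g - muk mus k0).
exists D => k [hk hg]; rewrite degz_abs // lez_nat; apply: HD.
by rewrite -hg muk_split // [muk mus k0 + _]addrC addrK.
Qed.

Lemma Box_fin D : finite_set (Box D).
Proof.
pose emb (q : {ffun 'I_M -> 'I_D.+1}) : idx M := [ffun i => k0 i + (q i : nat)%:Z].
apply: (sub_finite_set _ (finite_image emb (@finite_finset _ setT))).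
move=> k [hk hd]; exists [ffun i => inord `|k i - k0 i|%N] => //.
apply/ffunP => i; rewrite !ffunE inordK; last first.
  have := coord_le_degz i hk; have := hk i; lia.
by rewrite gez0_abs ?subr_ge0 // [k0 i + _]addrC subrK.
Qed.

Lemma Fs_fin g : finite_set (Fs g).
Proof.
have [D HD] := Fs_bound g; apply: (sub_finite_set _ (Box_fin D)).
by move=> k hk; split; [case: hk | exact: HD].
Qed.

Lemma fcoef_lin (a : C) (c1 c2 : idx M -> C) g :
  fcoef mus k0 (fun k => a * c1 k + c2 k) g =
  a * fcoef mus k0 c1 g + fcoef mus k0 c2 g.
Proof.
rewrite /fcoef !(fsbig_finite _ _ (Fs_fin g)) big_split /= mulr_sumr.
by [].
Qed.

Lemma Atilde_lin (a : C) (f1 f2 : G -> C) : Atilde mus k0 f1 -> Atilde mus k0 f2 ->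
  Atilde mus k0 (fun g => a * f1 g + f2 g).
Proof.
move=> [c1 e1] [c2 e2]; exists (fun k => a * c1 k + c2 k).
by apply: funext => g; rewrite fcoef_lin e1 e2.
Qed.

Lemma Atilde_diff (f1 f2 : G -> C) : Atilde mus k0 f1 -> Atilde mus k0 f2 ->
  exists c, (fun g => f1 g - f2 g) = fcoef mus k0 c.
Proof.
move=> h1 h2; have [c ec] := Atilde_lin (-1) h2 h1; exists c.
rewrite -ec; apply: funext => g; by rewrite mulN1r addrC.
Qed.

Definition supp n (c : idx M -> C) :=
  forall k, idx_le k0 k -> degz k < n%:Z -> c k = 0.

Lemma supp0 c : supp 0 c.
Proof. move=> k hk hd; have := degz_ge0 hk; lia. Qed.

Lemma fcoef_vanish n c g D : supp n c -> (forall k, Fs g k -> degz k <= D%:Z) ->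
  (D < n)%N -> fcoef mus k0 c g = 0.
Proof.
move=> hs hD hDn; apply: fsbig1 => k [hk hg]; have := hD k (conj hk hg) => hh.
by apply: (hs k hk); lia.
Qed.

Definition P2 g := [set kp : idx M * idx M | idx_le k0 kp.1 /\
  idx_le (idx0 M) kp.2 /\ kp.2 <> idx0 M /\ muk mus (idx_add kp.1 kp.2) = g].

Lemma degz_add k p : degz (idx_add k p) = degz k + \sum_(i < M) p i.
Proof.
rewrite /degz -big_split; apply: eq_bigr => i _; rewrite ffunE /=.
by rewrite addrAC.
Qed.

Lemma sum_pos p : idx_le (idx0 M) p -> p <> idx0 M -> 0 < \sum_(i < M) p i.
Proof.
move=> h0 hne.
case: (pselect (exists i, p i != 0)) => [[i hi]|hn]; last first.
  exfalso; apply: hne; apply/ffunP => i; rewrite ffunE; apply/eqP.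
  by apply/negPn/negP => hh; apply: hn; exists i.
rewrite (bigD1 i) //=.
have pi0 : 0 <= p i by have := h0 i; rewrite ffunE.
have h : 0 < p i by rewrite lt0r hi pi0.
rewrite (lt_le_trans h) // lerDl sumr_ge0 // => j _.
by have := h0 j; rewrite ffunE.
Qed.

Lemma P2_fin g : finite_set (P2 g).
Proof.
have [D HD] := Fs_bound g.
apply: (sub_finite_set _ (finite_setX (Box_fin D)
  (finite_image (fun x : idx M * idx M => [ffun i => x.2 i - x.1 i] : idx M)
    (finite_setX (Box_fin D) (Box_fin D))))).
move=> [k p] [hk [hp [hne hg]]]; simpl in *.
have hkp : idx_le k0 (idx_add k p).
  by move=> i; rewrite ffunE; have := hp i; rewrite ffunE; have := hk i; simpl; lia.
have hd := HD _ (conj hkp hg).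
have hpos := sum_pos hp hne.
rewrite degz_add in hd.
split => /=; first by split => //; lia.
exists (k, idx_add k p).
  split; split => //=; first lia.
  by rewrite degz_add; lia.
by apply/ffunP => i; rewrite !ffunE /= addrC addKr.
Qed.

Definition conv (a : idx M -> idx M -> C) (m : idx M) : C :=
  \sum_(x \in P2 (muk mus m))
     (if idx_add x.1 x.2 == m then a x.1 x.2 else 0).

Lemma fcoef2_conv a : fcoef2 mus k0 a = fcoef mus k0 (conv a).
Proof.
apply: funext => g.
transitivity (\sum_(m \in Fs g) \sum_(x \in P2 g)
   (if idx_add x.1 x.2 == m then a x.1 x.2 else 0)); last first.
  by apply: eq_fsbigr => m /set_mem [_ hg]; rewrite /conv hg.
rewrite exchange_fsbig; [|exact: Fs_fin|exact: P2_fin].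
symmetry; apply: eq_fsbigr => x /set_mem [hk [hp [hne hg]]].
have hkp : Fs g (idx_add x.1 x.2).
  split => // i; rewrite ffunE; have := hp i; rewrite ffunE; have := hk i; move=> h1 h2; rewrite -[k0 i]addr0; exact: lerD.
rewrite (fsbigD1 (idx_add x.1 x.2) _ _ (Fs_fin g) hkp).
rewrite eqxx fsbig1 /=; [by rewrite addr0 | move=> m [hm hne']].
by rewrite ifF //; apply/eqP => e; apply: hne'; rewrite e.
Qed.

Lemma lt_helper (a b : int) n : a < b -> b < n.+1%:Z -> a < n%:Z.
Proof. lia. Qed.

Lemma degz_lt k p : idx_le (idx0 M) p -> p <> idx0 M -> degz k < degz (idx_add k p).
Proof. move=> hp hne; rewrite degz_add; have := sum_pos hp hne; lia. Qed.

Lemma conv_supp n c Cc : supp n c -> supp n.+1 (conv (fun k p => c k * Cc k p)).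
Proof.
move=> hs m hm hdm; apply: fsbig1 => x [hk [hp [hne hg]]].
case: eqP => [e|//]; rewrite hs ?mul0r //.
apply: (lt_helper _ hdm); rewrite -e; exact: degz_lt.
Qed.

Lemma step (A : set (G -> C)) (J : (G -> C) -> G -> C) n (f1 f2 : G -> C) (c : idx M -> C) : asym_contractive mus k0 A J -> A f1 -> A f2 ->
  (fun g => f1 g - f2 g) = fcoef mus k0 c -> supp n c ->
  exists c', (fun g => J f1 g - J f2 g) = fcoef mus k0 c' /\ supp n.+1 c'.
Proof.
move=> hJ h1 h2 e hs; have [Cc eC] := hJ f1 f2 h1 h2 c e.
exists (conv (fun k p => c k * Cc k p)); split; first by rewrite eC fcoef2_conv.
exact: conv_supp.
Qed.

Lemma partii (A : set (G -> C)) (J : (G -> C) -> (G -> C)) :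
  A `<=` Atilde mus k0 -> A !=set0 -> asym_closed mus k0 A ->
  (forall S, A S -> A (J S)) -> asym_contractive mus k0 A J ->
  exists S, [/\ A S, S = J S & forall S', A S' -> S' = J S' -> S' = S].
Proof.
move=> Asub [f0 Af0] Acl AJ hJ.
pose u n := iter n J f0.
have Au : forall n, A (u n) by elim => //= n IH; apply: AJ.
have hd : forall n, exists d, (fun g => u n g - u n.+1 g) = fcoef mus k0 d /\ supp n d.
  elim => [|n [d [e hs]]].
  - have [c ec] := Atilde_diff (Asub _ (Au 0%N)) (Asub _ (Au 1%N)).
    by exists c; split; [|exact: supp0].
  - exact: (step hJ (Au n) (Au n.+1) e hs).
case: (choice hd) => d hd'.
have [c0 ec0] := Asub _ (Au 0%N).
pose e n m := c0 m - \sum_(j < n) d j m.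
have fe : forall n, u n = fcoef mus k0 (e n).
  elim => [|n IH].
    have -> : e 0%N = c0 by apply: funext => m; rewrite /e big_ord0 subr0.
    exact: ec0.
  have E : e n.+1 = (fun m => -1 * d n m + e n m).
    by apply: funext => m; rewrite /e big_ord_recr /= opprD addrA mulN1r [RHS]addrC.
  apply: funext => g; rewrite E fcoef_lin -IH.
  have hn := f_equal (fun F => F g) (proj1 (hd' n)); simpl in hn.
  by rewrite -hn mulN1r opprB subrK.
pose N (m : idx M) := (`|degz m|%N).+1.
have stab : forall m a, idx_le k0 m -> (N m <= a)%N ->
    \sum_(j < a) d j m = \sum_(j < N m) d j m.
  move=> m a hm ha; rewrite -!(big_mkord xpredT (fun j => d j m)) (big_cat_nat (leq0n (N m)) ha) /=.
  rewrite [X in _ + X]big1_seq ?addr0 // => j /andP[_]; rewrite mem_index_iota.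
  move=> /andP[hj _]; apply: (proj2 (hd' j)) => //.
  have := degz_ge0 hm; rewrite /N in hj; lia.
pose cinf m := e (N m) m.
have suppd : forall n, supp n (fun m => cinf m - e n m).
  move=> n m hm hdm; rewrite /cinf /e (stab m n) //; first by rewrite subrr.
  rewrite /N; have := degz_ge0 hm; lia.
have repd : forall n, (fun g => fcoef mus k0 cinf g - u n g) =
                      fcoef mus k0 (fun m => cinf m - e n m).
  move=> n; apply: funext => g; rewrite fe.
  transitivity (fcoef mus k0 (fun m => -1 * e n m + cinf m) g); last first.
    by rewrite /fcoef; apply: eq_fsbigr => m _; rewrite mulN1r addrC.
  by rewrite fcoef_lin mulN1r addrC.
set finf := fcoef mus k0 cinf.
have Ainf : Atilde mus k0 finf by exists cinf.
have cvg : asym_cvg u finf.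
  move=> g; have [D HD] := Fs_bound g; exists D.+1 => n hn.
  have hh : fcoef mus k0 cinf g - u n g = fcoef mus k0 (fun m => cinf m - e n m) g.
    exact: (f_equal (fun F => F g) (repd n)).
  have := fcoef_vanish (suppd n) HD hn; rewrite -hh => /eqP.
  by rewrite subr_eq0 => /eqP <-.
have Af := Acl u finf Au Ainf cvg.
have vanish_at : forall (f1 f2 : G -> C) c n g D,
    (fun g => f1 g - f2 g) = fcoef mus k0 c -> supp n c ->
    (forall k, Fs g k -> degz k <= D%:Z) -> (D < n)%N -> f1 g = f2 g.
  move=> f1 f2 c n g D ec hs HD hn.
  have := fcoef_vanish hs HD hn; rewrite -ec => /eqP.
  by rewrite subr_eq0 => /eqP.
have hfix : finf = J finf.
  apply: funext => g; have [D HD] := Fs_bound g.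
  have [c' [ec' hs']] := step hJ Af (Au D.+1) (repd D.+1) (suppd D.+1).
  have h1 := vanish_at _ _ _ _ _ _ ec' hs' HD (ltnW (ltnSn D.+1)).
  have h2 := vanish_at _ _ _ _ _ _ (repd D.+2) (suppd D.+2) HD (ltnW (ltnSn D.+1)).
  by rewrite h1; exact: h2.
exists finf; split => // S' AS' hS'.
have H : forall n, exists c, (fun g => S' g - finf g) = fcoef mus k0 c /\ supp n c.
  elim => [|n [c [ec hs]]].
    have [c ec] := Atilde_diff (Asub _ AS') Ainf.
    by exists c; split; [|exact: supp0].
  by have := step hJ AS' Af ec hs; rewrite -hS' -hfix.
apply: funext => g; have [D HD] := Fs_bound g.
have [c [ec hs]] := H D.+1.
exact: (vanish_at _ _ _ _ _ _ ec hs HD (ltnSn D)).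
Qed.

Lemma parti (J : (G -> C) -> (G -> C)) :
     (forall S, Atilde mus k0 S -> Atilde mus k0 (J S)) ->
     (forall (a : C) S T, Atilde mus k0 S -> Atilde mus k0 T ->
        J (fun g => a * S g + T g) = (fun g => a * J S g + J T g)) ->
     (exists cc : idx M -> idx M -> C,
        forall S (c : idx M -> C), Atilde mus k0 S -> S = fcoef mus k0 c ->
          J S = fcoef2 mus k0 (fun j p => c j * cc j p)) ->
     forall S0, Atilde mus k0 S0 ->
       exists S, [/\ Atilde mus k0 S, S = (fun g => J S g + S0 g)
         & forall S', Atilde mus k0 S' -> S' = (fun g => J S' g + S0 g) -> S' = S].
Proof.
move=> hA hlin [cc hcc] S0 hS0.
apply: (partii (A := Atilde mus k0) (J := fun S => (fun g => J S g + S0 g))).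
- by [].
- by exists S0.
- by move=> u f _ hf _.
- move=> S hS; have := Atilde_lin 1 (hA S hS) hS0.
  by congr Atilde; apply: funext => g; rewrite mul1r.
- move=> f1 f2 h1 h2 c ec; exists cc.
  have hd : Atilde mus k0 (fun g => -1 * f2 g + f1 g) by apply: Atilde_lin.
  have ec' : (fun g => -1 * f2 g + f1 g) = fcoef mus k0 c.
    by rewrite -ec; apply: funext => g; rewrite mulN1r addrC.
  have := hcc _ c hd ec'; rewrite hlin // => <-.
  apply: funext => g /=.
  by rewrite mulN1r opprD addrACA subrr addr0 addrC.
Qed.

End Main.

Unset Implicit Arguments. Set Strict Implicit.

Theorem mainTheorem6 (R : realType) (G : zmodType) (le : rel G)
  (HG : ordered_abelian_group le) (M : nat) (HM : (1 <= M)%N)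
  (mus : 'I_M -> G) (Hmus : forall i, lt_of le (mus i) 0) (k0 : idx M) :
  (* (i) *)
  (forall J : (G -> R[i]) -> (G -> R[i]),
     (forall S, Atilde mus k0 S -> Atilde mus k0 (J S)) ->
     (forall (a : R[i]) S T, Atilde mus k0 S -> Atilde mus k0 T ->
        J (fun g => a * S g + T g) = (fun g => a * J S g + J T g)) ->
     (exists cc : idx M -> idx M -> R[i],
        forall S (c : idx M -> R[i]), Atilde mus k0 S -> S = fcoef mus k0 c ->
          J S = fcoef2 mus k0 (fun j p => c j * cc j p)) ->
     forall S0, Atilde mus k0 S0 ->
       exists S, [/\ Atilde mus k0 S, S = (fun g => J S g + S0 g)
         & forall S', Atilde mus k0 S' -> S' = (fun g => J S' g + S0 g) -> S' = S])
  /\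
  (* (ii) *)
  (forall (A : set (G -> R[i])) (J : (G -> R[i]) -> (G -> R[i])),
     A `<=` Atilde mus k0 -> A !=set0 -> asym_closed mus k0 A ->
     (forall S, A S -> A (J S)) -> asym_contractive mus k0 A J ->
     exists S, [/\ A S, S = J S & forall S', A S' -> S' = J S' -> S' = S]).
Proof.
split.
- exact: (parti HG Hmus).
- exact: (partii HG Hmus).
Qed.
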